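(* In the two-parallel-path setting with the linear decision rule, suppose the inputs $f_s(t),b_d(t)$ are positive and non-decreasing in $t$, all initial pheromone levels are positive, and the initial flows at vertices other than $s,d$ satisfy $f_v(0)\le f_s(0)$, $b_v(0)\le b_d(0)$. Then for every edge $(u,v)\in E$ and every integer $t\ge0$ with $$t\ \ge\ T_1:=\max_{(u,v)\in E}\frac{\log\!\big(p_{uv}(0)/(f_s(0)+b_d(0))\big)}{\log(1/\delta)},$$ we have $p_{uv}(t)\le\dfrac{2\,(f_s(t)+b_d(t))}{1-\delta}$.
   Context: Model (linear decision rule). Directed graph $G=(V,E)$, source $s$, destination $d$, discrete time; pheromone $p_{uv}(t)$, forward flows $f_v(t)$, backward flows $b_v(t)$; leakages $l_v\in[0,1]$; decay $\delta\in(0,1)$; exogenous inputs $f_s(t),b_d(t)$. Edge flows: $f_{uv}(t)=f_u(t)p_{uv}(t)/\sum_{z:(u,z)\in E}p_{uz}(t)$, $b_{uv}(t)=b_v(t)p_{uv}(t)/\sum_{z:(z,v)\in E}p_{zv}(t)$ (at a vertex with a single outgoing, resp. incoming, edge the whole flow goes along it). Updates: $f_v(t+1)=(1-l_v)\sum_{z:(z,v)\in E}f_{zv}(t)$ for $v\neq s$, $b_u(t+1)=(1-l_u)\sum_{z:(u,z)\in E}b_{uz}(t)$ for $u\ne d$, $p_{uv}(t+1)=\delta(p_{uv}(t)+f_{uv}(t)+b_{uv}(t))$. Two parallel paths: $G$ is the union of directed paths $P_1,P_2$ from $s$ to $d$ sharing only $s,d$. *)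

(* Defs.v *)
From mathcomp Require Import all_boot all_order all_algebra.
From mathcomp Require Import all_classical all_reals all_analysis.
Set Implicit Arguments. Unset Strict Implicit. Unset Printing Implicit Defensive.
Import Order.TTheory GRing.Theory Num.Theory.
Local Open Scope ring_scope.

Section Model.
Variables (V : finType) (R : realType).

Definition path_edges (s : V) (p : seq V) : seq (V * V) := zip (s :: p) p.

(* p is (the list of vertices after s of) a simple directed E-path from s to d *)
Definition is_st_path (E : rel V) (s d : V) (p : seq V) : Prop :=
  [/\ path E s p, last s p = d & uniq (s :: p)].

Definition two_parallel_paths (E : rel V) (s d : V) : Prop :=
  s != d /\
  exists p1 p2 : seq V,
    [/\ is_st_path E s d p1, is_st_path E s d p2, p1 != p2,
        (forall x, x \in p1 -> x \in p2 -> x = d) /\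
        (forall x y, E x y = ((x, y) \in path_edges s p1) || ((x, y) \in path_edges s p2))
      & (forall v : V, (v \in s :: p1) || (v \in s :: p2))].

Definition fflow (E : rel V) (p : V -> V -> nat -> R) (f : V -> nat -> R)
  (u v : V) (t : nat) : R :=
  if #|[pred z | E u z]| == 1%N then f u t
  else f u t * p u v t / \sum_(z | E u z) p u z t.

Definition bflow (E : rel V) (p : V -> V -> nat -> R) (b : V -> nat -> R)
  (u v : V) (t : nat) : R :=
  if #|[pred z | E z v]| == 1%N then b v t
  else b v t * p u v t / \sum_(z | E z v) p z v t.

Definition linear_dynamics (E : rel V) (s d : V) (l : V -> R) (delta : R)
  (p : V -> V -> nat -> R) (f b : V -> nat -> R) : Prop :=
  [/\ (forall v t, v != s ->
         f v t.+1 = (1 - l v) * \sum_(z | E z v) fflow E p f z v t),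
      (forall u t, u != d ->
         b u t.+1 = (1 - l u) * \sum_(z | E u z) bflow E p b u z t)
    & (forall u v t, E u v ->
         p u v t.+1 = delta * (p u v t + fflow E p f u v t + bflow E p b u v t))].

End Model.

(* Main.v *)
Require Import Defs.
From mathcomp Require Import all_boot all_order all_algebra.
From mathcomp Require Import all_classical all_reals all_analysis.
From mathcomp Require Import ring lra.
Import Order.TTheory GRing.Theory Num.Theory.
Local Open Scope ring_scope.

Section Struct.
Variable V : finType.

Lemma pe_mem (s : V) (p : seq V) x y :
  (x, y) \in path_edges s p -> (x \in s :: p) /\ (y \in p).
Proof.
elim: p s => [|a p IH] s //=.
rewrite /path_edges /= in_cons => /orP [/eqP [-> ->]|H].
  by rewrite !in_cons !eqxx.
have [h1 h2] := IH a H.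
split; first by rewrite in_cons h1 orbT.
by rewrite in_cons h2 orbT.
Qed.

Arguments pe_mem {s p x y}.

Lemma pe_pred (s : V) (p : seq V) z1 z2 v : uniq (s :: p) ->
  (z1, v) \in path_edges s p -> (z2, v) \in path_edges s p -> z1 = z2.
Proof.
elim: p s => [|a p IH] s //= Hu.
move: Hu => /= /andP [Hs Hu].
have Ha : a \notin p by move: Hu => /= /andP [].
rewrite /path_edges /= !in_cons.
case/orP => [/eqP [e1 e2]|H1]; case/orP => [/eqP [e3 e4]|H2].
- by rewrite e1 e3.
- have [_ h] := pe_mem H2; by move: Ha; rewrite -e2 h.
- have [_ h] := pe_mem H1; by move: Ha; rewrite -e4 h.
- exact: IH Hu H1 H2.
Qed.

Lemma pe_succ (s : V) (p : seq V) u z1 z2 : uniq (s :: p) ->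
  (u, z1) \in path_edges s p -> (u, z2) \in path_edges s p -> z1 = z2.
Proof.
elim: p s => [|a p IH] s //= Hu.
move: Hu => /= /andP [Hs Hu].
rewrite /path_edges /= !in_cons.
case/orP => [/eqP [e1 e2]|H1]; case/orP => [/eqP [e3 e4]|H2].
- by rewrite e2 e4.
- have [h _] := pe_mem H2; move: Hs; by rewrite -e1 h.
- have [h _] := pe_mem H1; move: Hs; by rewrite -e3 h.
- exact: IH Hu H1 H2.
Qed.

Lemma pe_last (s : V) (p : seq V) x y : uniq (s :: p) ->
  (x, y) \in path_edges s p -> x != last s p.
Proof.
elim: p s => [|a p IH] s //= /andP [Hs Hu].
rewrite /path_edges /= in_cons => /orP [/eqP [-> _]|H].
  apply/eqP => E; move: Hs; rewrite E mem_last //.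
exact: IH Hu H.
Qed.
End Struct.
Arguments pe_pred {V s p z1 z2 v}.
Arguments pe_succ {V s p u z1 z2}.
Arguments pe_last {V s p x y}.
Arguments pe_mem {V s p x y}.


Section Graph.
Variables (V : finType) (E : rel V) (s d : V).
Hypothesis G : two_parallel_paths E s d.

Lemma G_src x y : E x y -> x != d.
Proof.
case: G => _ [p1 [p2 [[_ L1 U1] [_ L2 U2] _ [_ HE] _]]].
rewrite HE => /orP [H|H].
  by rewrite -L1; exact: pe_last U1 H.
by rewrite -L2; exact: pe_last U2 H.
Qed.

Lemma G_tgt x y : E x y -> y != s.
Proof.
case: G => _ [p1 [p2 [[_ L1 U1] [_ L2 U2] _ [_ HE] _]]].
rewrite HE => /orP [H|H].
  have [_ h] := pe_mem H; apply/eqP => e; move: U1 => /andP [U _].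
  by move: U; rewrite -e h.
have [_ h] := pe_mem H; apply/eqP => e; move: U2 => /andP [U _].
by move: U; rewrite -e h.
Qed.

Lemma G_pred z1 z2 v : v != d -> E z1 v -> E z2 v -> z1 = z2.
Proof.
move=> vd.
case: G => _ [p1 [p2 [[_ L1 U1] [_ L2 U2] _ [Hd HE] _]]].
rewrite !HE => /orP [H1|H1] /orP [H2|H2].
- exact: pe_pred U1 H1 H2.
- have [_ h1] := pe_mem H1; have [_ h2] := pe_mem H2.
  by move: vd; rewrite (Hd _ h1 h2) eqxx.
- have [_ h1] := pe_mem H1; have [_ h2] := pe_mem H2.
  by move: vd; rewrite (Hd _ h2 h1) eqxx.
- exact: pe_pred U2 H1 H2.
Qed.

Lemma G_succ u z1 z2 : u != s -> E u z1 -> E u z2 -> z1 = z2.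
Proof.
move=> us Hz1 Hz2.
have ud := @G_src _ _ Hz1.
move: Hz1 Hz2.
case: G => _ [p1 [p2 [[_ L1 U1] [_ L2 U2] _ [Hd HE] _]]].
rewrite !HE => /orP [H1|H1] /orP [H2|H2].
- exact: pe_succ U1 H1 H2.
- have [h1 _] := pe_mem H1; have [h2 _] := pe_mem H2.
  move: h1 h2; rewrite !in_cons (negbTE us) /= => h1 h2.
  by move: ud; rewrite (Hd _ h1 h2) eqxx.
- have [h1 _] := pe_mem H1; have [h2 _] := pe_mem H2.
  move: h1 h2; rewrite !in_cons (negbTE us) /= => h1 h2.
  by move: ud; rewrite (Hd _ h2 h1) eqxx.
- exact: pe_succ U2 H1 H2.
Qed.
End Graph.
Arguments G_src {V E s d} G {x y}.
Arguments G_tgt {V E s d} G {x y}.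
Arguments G_pred {V E s d} G {z1 z2 v}.
Arguments G_succ {V E s d} G {u z1 z2}.

Lemma fflow_bnd (R : realType) (V : finType) (E : rel V) p (f : V -> nat -> R) u v t :
  E u v -> (forall z, E u z -> 0 < p u z t) -> 0 <= f u t ->
  0 <= fflow E p f u v t <= f u t.
Proof.
move=> Euv Hp Hf; rewrite /fflow; case: ifP => _; first by rewrite Hf lexx.
set S := \sum_(z | E u z) p u z t.
have HS : p u v t <= S.
  rewrite /S (bigD1 v) //= lerDl sumr_ge0 // => z /andP [Ez _].
  exact: ltW (Hp z Ez).
have Sp : 0 < S by apply: lt_le_trans HS; exact: Hp.
have q1 : p u v t / S <= 1 by rewrite ler_pdivrMr // mul1r.
have q0 : 0 <= p u v t / S by rewrite divr_ge0 // ltW // Hp.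
by rewrite -mulrA mulr_ge0 //= ler_piMr.
Qed.

Lemma bflow_bnd (R : realType) (V : finType) (E : rel V) p (b : V -> nat -> R) u v t :
  E u v -> (forall z, E z v -> 0 < p z v t) -> 0 <= b v t ->
  0 <= bflow E p b u v t <= b v t.
Proof.
move=> Euv Hp Hf; rewrite /bflow; case: ifP => _; first by rewrite Hf lexx.
set S := \sum_(z | E z v) p z v t.
have HS : p u v t <= S.
  rewrite /S (bigD1 u) //= lerDl sumr_ge0 // => z /andP [Ez _].
  exact: ltW (Hp z Ez).
have Sp : 0 < S by apply: lt_le_trans HS; exact: Hp.
have q1 : p u v t / S <= 1 by rewrite ler_pdivrMr // mul1r.
have q0 : 0 <= p u v t / S by rewrite divr_ge0 // ltW // Hp.
by rewrite -mulrA mulr_ge0 //= ler_piMr.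
Qed.

Arguments fflow_bnd {R V E p f u v t}.
Arguments bflow_bnd {R V E p b u v t}.

Theorem mainTheorem12 (R : realType) (V : finType) (E : rel V) (s d : V)
  (l : V -> R) (delta : R) (p : V -> V -> nat -> R) (f b : V -> nat -> R) :
  two_parallel_paths E s d ->
  (forall v, 0 <= l v <= 1) ->
  0 < delta < 1 ->
  linear_dynamics E s d l delta p f b ->
  (forall t, 0 < f s t) -> (forall t, f s t <= f s t.+1) ->
  (forall t, 0 < b d t) -> (forall t, b d t <= b d t.+1) ->
  (forall u v, E u v -> 0 < p u v 0%N) ->
  (forall v, v != s -> v != d -> 0 <= f v 0%N <= f s 0%N) ->
  (forall v, v != s -> v != d -> 0 <= b v 0%N <= b d 0%N) ->
  forall (u v : V) (t : nat), E u v ->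
    (forall x y, E x y ->
       ln (p x y 0%N / (f s 0%N + b d 0%N)) / ln (1 / delta) <= t%:R) ->
    p u v t <= 2 * (f s t + b d t) / (1 - delta).
Proof.
move=> G Hl /andP [d0 d1] [Hf Hb Hp] fs0 fsm bd0 bdm p0 f0 b0 u v t Euv Hln.
have inv : forall t, [/\ forall x y, E x y -> 0 < p x y t,
    forall v, v != d -> 0 <= f v t <= f s t &
    forall v, v != s -> 0 <= b v t <= b d t].
  elim => [|t' [IP IF IB]].
    split => //.
      move=> w wd; case: (eqVneq w s) => [->|ws]; last exact: f0.
      by rewrite lexx ltW.
    move=> w ws; case: (eqVneq w d) => [->|wd]; last exact: b0.
    by rewrite lexx ltW.
  split.
  - move=> x y Exy; rewrite Hp //.
    have := fflow_bnd Exy (IP x) (proj1 (andP (IF x (G_src G Exy)))).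
    have := bflow_bnd Exy (fun z Ez => IP z y Ez) (proj1 (andP (IB y (G_tgt G Exy)))).
    move=> /andP [h1 _] /andP [h2 _]; have := IP x y Exy.
    move=> h3; apply: mulr_gt0 => //; lra.
  - move=> w wd; case: (eqVneq w s) => [->|ws].
      by rewrite lexx ltW.
    rewrite Hf //.
    have := Hl w => /andP [l0 l1].
    case: (pickP (fun z => E z w)) => [z Ez|none].
      rewrite (big_pred1 z); last first.
        move=> x /=; apply/idP/eqP => [Ex|->] //; exact: (G_pred G wd Ex Ez).
      have /andP [h1 h2] := fflow_bnd Ez (IP z) (proj1 (andP (IF z (G_src G Ez)))).
      have /andP [_ h3] := IF z (G_src G Ez).
      have := fsm t'; nra.
    rewrite big_pred0 // mulr0 lexx ltW //.
  - move=> w ws; case: (eqVneq w d) => [->|wd].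
      by rewrite lexx ltW.
    rewrite Hb //.
    have := Hl w => /andP [l0 l1].
    case: (pickP (fun z => E w z)) => [z Ez|none].
      rewrite (big_pred1 z); last first.
        move=> x /=; apply/idP/eqP => [Ex|->] //; exact: (G_succ G ws Ex Ez).
      have /andP [h1 h2] := bflow_bnd Ez (fun y Ey => IP y z Ey) (proj1 (andP (IB z (G_tgt G Ez)))).
      have /andP [_ h3] := IB z (G_tgt G Ez).
      have := bdm t'; nra.
    rewrite big_pred0 // mulr0 lexx ltW //.
set c := fun t => f s t + b d t.
have cm : forall t, c t <= c t.+1 by move=> t'; rewrite /c; have := fsm t'; have := bdm t'; lra.
have cp : forall t, 0 < c t by move=> t'; rewrite /c; have := fs0 t'; have := bd0 t'; lra.
have c0t : forall t, c 0%N <= c t.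
  elim => [|t' IH]; first exact: lexx.
  exact: le_trans IH (cm t').
have dn : 1 - delta != 0 by rewrite subr_eq0 eq_sym lt_eqF.
set K := delta / (1 - delta).
have K0 : 0 <= K by rewrite divr_ge0 ?ltW // subr_gt0.
have key : forall t, p u v t <= delta ^+ t * p u v 0%N + K * c t.
  elim => [|t' IH].
    rewrite expr0 mul1r lerDl mulr_ge0 // ltW //.
  have [IP IF IB] := inv t'.
  rewrite Hp //.
  have /andP [_ h1] := fflow_bnd Euv (IP u) (proj1 (andP (IF u (G_src G Euv)))).
  have /andP [_ h2] := bflow_bnd Euv (fun z Ez => IP z v Ez) (proj1 (andP (IB v (G_tgt G Euv)))).
  have /andP [_ h3] := IF u (G_src G Euv).
  have /andP [_ h4] := IB v (G_tgt G Euv).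
  have e : delta * (delta ^+ t' * p u v 0%N + K * c t' + c t') =
           delta ^+ t'.+1 * p u v 0%N + K * c t'.
    by rewrite exprS /K; field.
  apply: le_trans (_ : _ <= delta * (delta ^+ t' * p u v 0%N + K * c t' + c t')) _.
    rewrite ler_pM2l //; rewrite /c /= in IH *; lra.
  by rewrite e lerD2l ler_wpM2l.
have hdt : delta ^+ t * p u v 0%N <= c 0%N.
  have Hl1 := Hln u v Euv.
  have L0 : 0 < ln (1 / delta) by apply: ln_gt0; rewrite div1r invf_gt1.
  rewrite ler_pdivrMr // in Hl1.
  have dtp : 0 < delta ^+ t by rewrite exprn_gt0.
  have e1 : t%:R * ln (1 / delta) = ln ((delta ^+ t)^-1).
    by rewrite -exprVn lnXn ?mulr_natl ?invr_gt0 // div1r.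
  rewrite e1 in Hl1.
  have hq : 0 < p u v 0%N / (f s 0%N + b d 0%N) by exact: (divr_gt0 (p0 _ _ Euv) (cp 0%N)).
  rewrite ler_ln ?posrE ?invr_gt0 // in Hl1.
  rewrite ler_pdivrMr ?(cp 0%N) // in Hl1.
  by rewrite -ler_pdivlMl // mulrC.
have := key t; have := c0t t; have := cp t.
have e2 : c t + K * c t = c t / (1 - delta) by rewrite /K; field.
have e3 : 2 * c t / (1 - delta) = 2 * (c t / (1 - delta)) by rewrite mulrA.
have h5 : 0 <= c t / (1 - delta) by rewrite divr_ge0 ?ltW ?cp // subr_gt0.
move: e2 e3 h5 hdt; rewrite /c /= => e2 e3 h5 hdt; lra.
Qed.
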